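(* Consider the binary sequential learning model described in the context with signal accuracy $p\in(1/2,1)$. Let $\alpha=(1-p)/p$ and, for each integer $k\ge 2$, let $$v_k=\frac{1-\alpha^{\frac{k-2}{k-1}}}{1-\alpha^{\frac{k-2}{k-1}}+\alpha^{\frac{-1}{k-1}}-\alpha},\qquad \varepsilon_k=\log\frac{1-v_k}{v_k}.$$ Suppose that, subject to privacy budget $\varepsilon$, agents employ the randomized response strategy with flip probability $u(\varepsilon)=\frac{1}{1+e^{\varepsilon}}$ before a cascade. Then for $\varepsilon\in(\varepsilon_{k+1},\varepsilon_k]$ the information cascade threshold $k(\varepsilon)$ does not change (it equals $k$), and on this interval the probability of a correct cascade is increasing in $\varepsilon$.
   Context: Binary model: unknown state $\theta\in\{-1,+1\}$ with uniform prior; agents $n=1,2,\dots$ act in sequence; agent $n$ privately observes $s_n\in\{-1,+1\}$, i.i.d. given $\theta$ with $\mathbb{P}(s_n=\theta\mid\theta)=p$. Before a cascade, agent $n$'s intended action equals her signal, $a_n=s_n$, and she publicly reports $x_n=a_n$ with probability $1-u(\varepsilon)$ and $x_n=-a_n$ with probability $u(\varepsilon)$. Let $\rho(\varepsilon)=\frac{(1-u(\varepsilon))(1-p)+u(\varepsilon)p}{u(\varepsilon)(1-p)+p(1-u(\varepsilon))}$. The information cascade threshold is the integer $k(\varepsilon)=\lfloor\log_{\rho(\varepsilon)}\frac{1-p}{p}\rfloor+1$: it is the value of the difference between the number of $+1$ and $-1$ reports in the public history at which agents become indifferent to their private signals. An information cascade starts at the first agent whose observed history has (number of $+1$ reports)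 $-$ (number of $-1$ reports) equal to $+k(\varepsilon)$ or $-k(\varepsilon)$; from then on every agent takes and truthfully reports the action favored by the history ($+1$ or $-1$ respectively). The cascade is correct if this action equals $\theta$; the probability of a correct cascade is the probability of this event. *)

(* Defs.v *)
From Stdlib Require Import Reals ZArith Lra.
From Coquelicot Require Import Coquelicot.
Open Scope R_scope.

Definition flip_prob (eps : R) : R := 1 / (1 + exp eps).

Definition rho (p eps : R) : R :=
  let u := flip_prob eps in
  ((1 - u) * (1 - p) + u * p) / (u * (1 - p) + p * (1 - u)).

Definition logb (b x : R) : R := ln x / ln b.

Definition cascade_threshold (p eps : R) : Z :=
  (Int_part (logb (rho p eps) ((1 - p) / p)) + 1)%Z.

Definition alpha (p : R) : R := (1 - p) / p.

Definition v_k (p : R) (k : nat) : R :=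
  let a := alpha p in
  let t := Rpower a ((INR k - 2) / (INR k - 1)) in
  (1 - t) / (1 - t + Rpower a (-1 / (INR k - 1)) - a).

(* eps_k = log((1-v_k)/v_k), as an extended real: for k = 2 one has
   v_2 = 0 and eps_2 = log(1/0) = +oo; for k >= 3, 0 < v_k < 1. *)
Definition eps_k (p : R) (k : nat) : Rbar :=
  if Req_EM_T (v_k p k) 0 then p_infty
  else Finite (ln ((1 - v_k p k) / v_k p k)).

(* Pre-cascade public walk of D = (#reports equal to one fixed value) minus
   (#reports of the other value), started at d, moving +1 with probability q
   and -1 with probability 1-q, absorbed at +K and -K.
   [reach q K s n d] is the probability that it is absorbed at s*K (s = +1 or
   -1) within n further steps. *)
Fixpoint reach (q : R) (K s : Z) (n : nat) (d : Z) : R :=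
  if Z.eqb d (s * K)%Z then 1
  else if Z.eqb d (- (s * K))%Z then 0
  else match n with
       | O => 0
       | S n' => q * reach q K s n' (d + 1)%Z + (1 - q) * reach q K s n' (d - 1)%Z
       end.

(* Probability of a correct cascade, under randomized response with privacy
   budget eps: theta uniform on {-1,+1}; given theta, each pre-cascade report
   x_n is +1 with probability
     P(x_n = +1 | theta = +1) = p (1-u) + (1-p) u,
     P(x_n = +1 | theta = -1) = (1-p)(1-u) + p u,
   and the cascade is correct iff the difference of reports first reaches
   theta * k(eps).  The probability is the limit of the finite-horizon
   probabilities (the sequence is nondecreasing and bounded by 1). *)
Definition correct_cascade_prob (p eps : R) : R :=
  let u := flip_prob eps in
  let K := cascade_threshold p eps in
  / 2 * real (Lim_seq (fun n => reach (p * (1 - u) + (1 - p) * u) K 1 n 0))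
  + / 2 * real (Lim_seq (fun n => reach ((1 - p) * (1 - u) + p * u) K (-1) n 0)).

Definition in_interval (p : R) (k : nat) (eps : R) : Prop :=
  Rbar_lt (eps_k p (S k)) (Finite eps) /\ Rbar_le (Finite eps) (eps_k p k).

(* Main.v *)
Require Import Defs.
From Stdlib Require Import Reals ZArith Lra Lia.
From Coquelicot Require Import Coquelicot.
Open Scope R_scope.

Lemma reach_bounds q K s : 0 <= q <= 1 -> forall n d, 0 <= reach q K s n d <= 1.
Proof.
  intros Hq n; induction n as [|n IH]; intros d; simpl.
  - destruct (Z.eqb d (s*K)); [lra|]. destruct (Z.eqb d (-(s*K))); lra.
  - destruct (Z.eqb d (s*K)); [lra|]. destruct (Z.eqb d (-(s*K))); [lra|].
    pose proof (IH (d+1)%Z). pose proof (IH (d-1)%Z). nra.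
Qed.

Lemma reach_mono q K s : 0 <= q <= 1 -> forall n d, reach q K s n d <= reach q K s (S n) d.
Proof.
  intros Hq n; induction n as [|n IH]; intros d.
  - simpl. destruct (Z.eqb d (s*K)); [lra|]. destruct (Z.eqb d (-(s*K))); [lra|].
    pose proof (reach_bounds q K s Hq 0 (d+1)%Z). pose proof (reach_bounds q K s Hq 0 (d-1)%Z).
    simpl in *. nra.
  - change (reach q K s (S n) d) with
      (if Z.eqb d (s * K)%Z then 1
       else if Z.eqb d (- (s * K))%Z then 0
       else q * reach q K s n (d + 1)%Z + (1 - q) * reach q K s n (d - 1)%Z).
    change (reach q K s (S (S n)) d) with
      (if Z.eqb d (s * K)%Z then 1
       else if Z.eqb d (- (s * K))%Z then 0
       else q * reach q K s (S n) (d + 1)%Z + (1 - q) * reach q K s (S n) (d - 1)%Z).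
    destruct (Z.eqb d (s*K)); [lra|]. destruct (Z.eqb d (-(s*K))); [lra|].
    pose proof (IH (d+1)%Z). pose proof (IH (d-1)%Z). nra.
Qed.

Definition Lf q K s d := real (Lim_seq (fun n => reach q K s n d)).

Lemma Lf_lim q K s d : 0 <= q <= 1 -> is_lim_seq (fun n => reach q K s n d) (Lf q K s d).
Proof.
  intros Hq. unfold Lf.
  assert (H : ex_finite_lim_seq (fun n => reach q K s n d)).
  { apply ex_finite_lim_seq_incr with 1.
    - intros n; apply reach_mono; auto.
    - intros n; apply reach_bounds; auto. }
  pose proof (Lim_seq_correct' _ H). exact H0.
Qed.

Lemma Lf_rec q K s d : 0 <= q <= 1 -> d <> (s*K)%Z -> d <> (-(s*K))%Z ->
  Lf q K s d = q * Lf q K s (d+1) + (1-q) * Lf q K s (d-1).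
Proof.
  intros Hq H1 H2.
  pose proof (Lf_lim q K s d Hq) as Hl.
  apply is_lim_seq_incr_1 in Hl.
  assert (Hl2 : is_lim_seq (fun n => reach q K s (S n) d)
                  (q * Lf q K s (d+1) + (1-q) * Lf q K s (d-1))).
  { eapply is_lim_seq_ext.
    - intros n. simpl. apply Z.eqb_neq in H1. apply Z.eqb_neq in H2.
      rewrite H1, H2. reflexivity.
    - apply is_lim_seq_plus'.
      + apply (is_lim_seq_scal_l _ q (Finite (Lf q K s (d+1)))). apply Lf_lim; auto.
      + apply (is_lim_seq_scal_l _ (1-q) (Finite (Lf q K s (d-1)))). apply Lf_lim; auto. }
  apply is_lim_seq_unique in Hl. apply is_lim_seq_unique in Hl2.
  rewrite Hl in Hl2. injection Hl2. auto.
Qed.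

Lemma Lf_top q K s : Lf q K s (s*K) = 1.
Proof.
  unfold Lf. rewrite (Lim_seq_ext _ (fun _ => 1)).
  - rewrite Lim_seq_const. reflexivity.
  - intros n; destruct n; simpl; rewrite Z.eqb_refl; reflexivity.
Qed.

Lemma Lf_bot q K s : (s*K <> 0)%Z -> Lf q K s (-(s*K)) = 0.
Proof.
  intros H. unfold Lf. rewrite (Lim_seq_ext _ (fun _ => 0)).
  - rewrite Lim_seq_const. reflexivity.
  - intros n. assert (Z.eqb (-(s*K)) (s*K) = false) by (apply Z.eqb_neq; lia).
    destruct n; simpl; rewrite H0, Z.eqb_refl; reflexivity.
Qed.

Fixpoint geo (r : R) (n : nat) : R := match n with O => 0 | S n => geo r n + r ^ n end.

Lemma geo_add r a b : geo r (a + b) = geo r a + r ^ a * geo r b.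
Proof.
  induction b as [|b IH]; simpl.
  - rewrite Nat.add_0_r; ring.
  - rewrite Nat.add_succ_r. simpl. rewrite IH, pow_add. ring.
Qed.

Lemma harmonic (L : Z -> R) (q : R) (K : nat) : 0 < q < 1 -> (1 <= K)%nat ->
  L (- Z.of_nat K)%Z = 0 -> L (Z.of_nat K) = 1 ->
  (forall d, (- Z.of_nat K < d < Z.of_nat K)%Z -> L d = q * L (d+1)%Z + (1-q) * L (d-1)%Z) ->
  L 0%Z = 1 / (1 + ((1-q)/q) ^ K).
Proof.
  intros Hq HK H0 H1 Hrec.
  set (r := (1-q)/q).
  set (g := fun j : nat => L (- Z.of_nat K + Z.of_nat j)%Z).
  set (D := g 1%nat - g 0%nat).
  assert (C1 : forall j, (S j < 2*K)%nat -> g (S (S j)) - g (S j) = r * (g (S j) - g j)).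
  { intros j Hj. unfold g.
    set (d := (- Z.of_nat K + Z.of_nat (S j))%Z).
    replace (- Z.of_nat K + Z.of_nat (S (S j)))%Z with (d+1)%Z by (unfold d; lia).
    replace (- Z.of_nat K + Z.of_nat j)%Z with (d-1)%Z by (unfold d; lia).
    assert (Hd : (- Z.of_nat K < d < Z.of_nat K)%Z) by (unfold d; lia).
    pose proof (Hrec d Hd). unfold r. field_simplify_eq; [|lra]. nra. }
  assert (C2 : forall j, (j < 2*K)%nat -> g (S j) - g j = r ^ j * D).
  { induction j as [|j IH]; intros Hj.
    - simpl. unfold D. ring.
    - rewrite C1 by lia. rewrite IH by lia. simpl. ring. }
  assert (C3 : forall j, (j <= 2*K)%nat -> g j = g 0%nat + D * geo r j).
  { induction j as [|j IH]; intros Hj.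
    - simpl. ring.
    - simpl. pose proof (C2 j ltac:(lia)). rewrite IH in H by lia. lra. }
  assert (G0 : g 0%nat = 0). { unfold g. rewrite Z.add_0_r. exact H0. }
  assert (G2 : g (2*K)%nat = 1). { unfold g. rewrite <- H1. f_equal. lia. }
  assert (GK : g K = L 0%Z). { unfold g. f_equal. lia. }
  pose proof (C3 (2*K)%nat ltac:(lia)) as E2.
  pose proof (C3 K ltac:(lia)) as EK.
  replace (2*K)%nat with (K+K)%nat in E2 by lia. rewrite geo_add in E2.
  replace (K+K)%nat with (2*K)%nat in E2 by lia.
  rewrite G2, G0 in E2. rewrite GK, G0 in EK.
  assert (Hr : 0 < r) by (unfold r; apply Rdiv_lt_0_compat; lra).
  pose proof (pow_lt r K Hr).
  rewrite EK. field_simplify_eq; [|lra]. rewrite E2. ring.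
Qed.

Lemma Lf_plus q k : 0 < q < 1 -> (1 <= k)%nat ->
  Lf q (Z.of_nat k) 1 0 = 1 / (1 + ((1-q)/q) ^ k).
Proof.
  intros Hq Hk. apply (harmonic (Lf q (Z.of_nat k) 1)); auto.
  - pose proof (Lf_bot q (Z.of_nat k) 1 ltac:(lia)). rewrite Z.mul_1_l in H. exact H.
  - pose proof (Lf_top q (Z.of_nat k) 1). rewrite Z.mul_1_l in H. exact H.
  - intros d Hd. apply Lf_rec; [lra|lia|lia].
Qed.

Lemma Lf_minus q k : 0 < q < 1 -> (1 <= k)%nat ->
  Lf q (Z.of_nat k) (-1) 0 = 1 / (1 + (q/(1-q)) ^ k).
Proof.
  intros Hq Hk.
  replace (q/(1-q)) with ((1-(1-q))/(1-q)) by (f_equal; ring).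
  apply (harmonic (fun d => Lf q (Z.of_nat k) (-1) (-d)) (1-q)); auto; try lra.
  - simpl. rewrite Z.opp_involutive.
    pose proof (Lf_bot q (Z.of_nat k) (-1) ltac:(lia)).
    replace (- (-1 * Z.of_nat k))%Z with (Z.of_nat k) in H by lia. exact H.
  - simpl. pose proof (Lf_top q (Z.of_nat k) (-1)).
    replace (-1 * Z.of_nat k)%Z with (- Z.of_nat k)%Z in H by lia. exact H.
  - intros d Hd. simpl. rewrite Lf_rec with (d := (-d)%Z); [|lra|lia|lia].
    replace (- (d+1))%Z with (-d-1)%Z by lia.
    replace (- (d-1))%Z with (-d+1)%Z by lia. ring.
Qed.

Lemma flip_bounds e : 0 < flip_prob e < 1.
Proof.
  unfold flip_prob. pose proof (exp_pos e).
  split. apply Rdiv_lt_0_compat; lra.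
  apply Rmult_lt_reg_r with (1 + exp e); [lra|]. field_simplify; lra.
Qed.

Lemma rho_form p e : 1/2 < p < 1 ->
  rho p e = (alpha p + flip_prob e * (1 - alpha p)) / (1 - flip_prob e * (1 - alpha p)).
Proof.
  intros Hp. pose proof (flip_bounds e) as H. unfold rho, alpha.
  generalize dependent (flip_prob e). intros u H.
  assert (0 < u*(1-p) + p*(1-u)) by (assert (0 < u*(1-p)) by (apply Rmult_lt_0_compat; lra); assert (0 < p*(1-u)) by (apply Rmult_lt_0_compat; lra); lra).
  replace (1 - u * (1 - (1-p)/p)) with ((u*(1-p) + p*(1-u))/p) by (field; lra).
  field. lra.
Qed.

Lemma alpha_bounds p : 1/2 < p < 1 -> 0 < alpha p < 1.
Proof.
  intros Hp. unfold alpha. split. apply Rdiv_lt_0_compat; lra.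
  apply Rmult_lt_reg_r with p; [lra|]. field_simplify; lra.
Qed.

Definition cc p (m : nat) := Rpower (alpha p) (1 / (INR m - 1)).

Lemma cc_bounds p m : 1/2 < p < 1 -> (2 <= m)%nat -> alpha p <= cc p m < 1.
Proof.
  intros Hp Hm. pose proof (alpha_bounds p Hp).
  assert (Hx : 1 <= INR m - 1).
  { assert (INR 2 <= INR m) by (apply le_INR; lia). simpl in H0. lra. }
  assert (Hln : ln (alpha p) < 0) by (rewrite <- ln_1; apply ln_increasing; lra).
  assert (0 < 1/(INR m - 1) <= 1).
  { split. apply Rdiv_lt_0_compat; lra.
    apply Rmult_le_reg_r with (INR m - 1); [lra|]. field_simplify; lra. }
  unfold cc, Rpower. split.
  - rewrite <- (exp_ln (alpha p)) at 1 by lra. 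
    destruct (Req_dec (1 / (INR m - 1)) 1) as [E|E].
    + rewrite E, Rmult_1_l. lra.
    + apply Rlt_le. apply exp_increasing. assert (1 / (INR m - 1) < 1) by (destruct H0 as [_ [h|h]]; [exact h|contradiction]). nra.
  - assert (Hn : 1 / (INR m - 1) * ln (alpha p) < 0) by nra. pose proof (exp_increasing _ _ Hn) as He. rewrite exp_0 in He. exact He.
Qed.

Lemma ln_cc p m : 1/2 < p < 1 -> ln (cc p m) = ln (alpha p) / (INR m - 1).
Proof. intros. unfold cc, Rpower. rewrite ln_exp. unfold Rdiv. ring. Qed.

Lemma v_form p m : 1/2 < p < 1 -> (2 <= m)%nat ->
  v_k p m = (cc p m - alpha p) / ((1 - alpha p) * (1 + cc p m)).
Proof.
  intros Hp Hm. pose proof (alpha_bounds p Hp). pose proof (cc_bounds p m Hp Hm).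
  assert (Hx : 1 <= INR m - 1).
  { assert (INR 2 <= INR m) by (apply le_INR; lia). simpl in H1. lra. }
  unfold v_k. fold (alpha p).
  replace ((INR m - 2) / (INR m - 1)) with (1 + - (1 / (INR m - 1))) by (field; lra).
  replace (-1 / (INR m - 1)) with (- (1 / (INR m - 1))) by (field; lra).
  rewrite Rpower_plus, !Rpower_Ropp, Rpower_1 by lra. fold (cc p m).
  set (c := cc p m) in *. set (a := alpha p) in *.
  replace (1 - a * / c + / c - a) with ((1-a)*(1+c)/c) by (field; lra).
  field. split; lra.
Qed.

Lemma v_bounds p m : 1/2 < p < 1 -> (2 <= m)%nat -> 0 <= v_k p m < 1.
Proof.
  intros Hp Hm. rewrite v_form by auto.
  pose proof (alpha_bounds p Hp). pose proof (cc_bounds p m Hp Hm).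
  assert (0 < (1 - alpha p) * (1 + cc p m)) by (apply Rmult_lt_0_compat; lra).
  split.
  - apply Rmult_le_pos; [lra|]. apply Rlt_le; apply Rinv_0_lt_compat; lra.
  - apply Rmult_lt_reg_r with ((1 - alpha p) * (1 + cc p m)); [lra|].
    field_simplify; [|lra]. nra.
Qed.

Lemma rho_cc p m e : 1/2 < p < 1 -> (2 <= m)%nat ->
  rho p e - cc p m = (1 - alpha p) * (1 + cc p m) * (flip_prob e - v_k p m)
                      / (1 - flip_prob e * (1 - alpha p)).
Proof.
  intros Hp Hm. rewrite rho_form, v_form by auto.
  pose proof (alpha_bounds p Hp). pose proof (cc_bounds p m Hp Hm). pose proof (flip_bounds e).
  assert (0 < 1 - flip_prob e * (1 - alpha p)) by nra.
  field. repeat split; lra.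
Qed.

Lemma den_pos p e : 1/2 < p < 1 -> 0 < 1 - flip_prob e * (1 - alpha p).
Proof. intros. pose proof (alpha_bounds p H). pose proof (flip_bounds e). nra. Qed.

Lemma eps_lt v e : 0 < v < 1 -> ln ((1-v)/v) < e -> flip_prob e < v.
Proof.
  intros Hv H. assert (0 < (1-v)/v) by (apply Rdiv_lt_0_compat; lra).
  apply exp_increasing in H. rewrite exp_ln in H by lra.
  unfold flip_prob. pose proof (exp_pos e).
  apply Rmult_lt_reg_r with (1 + exp e); [lra|]. field_simplify; [|lra].
  apply Rmult_lt_compat_r with (r := v) in H; [|lra].
  field_simplify in H; lra.
Qed.

Lemma eps_le v e : 0 < v < 1 -> e <= ln ((1-v)/v) -> v <= flip_prob e.
Proof.
  intros Hv H. assert (0 < (1-v)/v) by (apply Rdiv_lt_0_compat; lra).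
  assert (exp e <= (1-v)/v).
  { rewrite <- (exp_ln ((1-v)/v)) by lra. destruct H; [apply Rlt_le; apply exp_increasing; auto|rewrite H; lra]. }
  unfold flip_prob. pose proof (exp_pos e).
  apply Rmult_le_reg_r with (1 + exp e); [lra|]. field_simplify; [|lra].
  apply Rmult_le_compat_r with (r := v) in H1; [|lra].
  field_simplify in H1; lra.
Qed.

Lemma interval_u p k e : 1/2 < p < 1 -> (2 <= k)%nat -> in_interval p k e ->
  v_k p k <= flip_prob e < v_k p (S k).
Proof.
  intros Hp Hk [H1 H2]. unfold eps_k in H1, H2.
  pose proof (v_bounds p k Hp Hk). pose proof (v_bounds p (S k) Hp ltac:(lia)).
  pose proof (flip_bounds e).
  split.
  - destruct (Req_EM_T (v_k p k) 0) as [E|E]; [lra|].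
    simpl in H2. apply eps_le; auto. split; [|lra]. destruct H as [[h|h] _]; [lra|congruence].
  - destruct (Req_EM_T (v_k p (S k)) 0) as [E|E]; [simpl in H1; contradiction|].
    simpl in H1. apply eps_lt; auto. split; [|lra]. destruct H0 as [[h|h] _]; [lra|congruence].
Qed.

Lemma rho_pos p e : 1/2 < p < 1 -> 0 < rho p e.
Proof.
  intros Hp. rewrite rho_form by auto. pose proof (den_pos p e Hp).
  pose proof (alpha_bounds p Hp). pose proof (flip_bounds e).
  apply Rdiv_lt_0_compat; nra.
Qed.

Lemma rho_range p k e : 1/2 < p < 1 -> (2 <= k)%nat ->
  v_k p k <= flip_prob e < v_k p (S k) -> cc p k <= rho p e < cc p (S k).
Proof.
  intros Hp Hk [H1 H2].
  pose proof (rho_cc p k e Hp Hk). pose proof (rho_cc p (S k) e Hp ltac:(lia)).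
  pose proof (den_pos p e Hp). pose proof (alpha_bounds p Hp).
  pose proof (cc_bounds p k Hp Hk). pose proof (cc_bounds p (S k) Hp ltac:(lia)).
  set (D := 1 - flip_prob e * (1 - alpha p)) in *.
  split.
  - assert (0 <= (1 - alpha p) * (1 + cc p k) * (flip_prob e - v_k p k) / D).
    { apply Rmult_le_pos; [|apply Rlt_le, Rinv_0_lt_compat; lra].
      apply Rmult_le_pos; [|lra]. apply Rmult_le_pos; lra. }
    lra.
  - assert ((1 - alpha p) * (1 + cc p (S k)) * (flip_prob e - v_k p (S k)) / D < 0).
    { assert (0 < (1 - alpha p) * (1 + cc p (S k))) by (apply Rmult_lt_0_compat; lra).
      assert (0 < / D) by (apply Rinv_0_lt_compat; lra).
      unfold Rdiv. assert (flip_prob e - v_k p (S k) < 0) by lra. 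
      assert ((1 - alpha p) * (1 + cc p (S k)) * (flip_prob e - v_k p (S k)) < 0) by nra.
      nra. }
    lra.
Qed.

Lemma threshold_k p k e : 1/2 < p < 1 -> (2 <= k)%nat ->
  v_k p k <= flip_prob e < v_k p (S k) -> cascade_threshold p e = Z.of_nat k.
Proof.
  intros Hp Hk Hu. pose proof (rho_range p k e Hp Hk Hu) as [R1 R2].
  pose proof (rho_pos p e Hp). pose proof (alpha_bounds p Hp).
  pose proof (cc_bounds p k Hp Hk). pose proof (cc_bounds p (S k) Hp ltac:(lia)).
  assert (Hx : 1 <= INR k - 1).
  { assert (INR 2 <= INR k) by (apply le_INR; lia). simpl in H3. lra. }
  assert (La : ln (alpha p) < 0) by (rewrite <- ln_1; apply ln_increasing; lra).
  assert (Lr : ln (rho p e) < 0) by (rewrite <- ln_1; apply ln_increasing; lra).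
  assert (L1 : ln (alpha p) / (INR k - 1) <= ln (rho p e)).
  { rewrite <- ln_cc by auto. apply ln_le; lra. }
  assert (L2 : ln (rho p e) < ln (alpha p) / INR k).
  { replace (INR k) with (INR (S k) - 1) by (rewrite S_INR; ring).
    rewrite <- ln_cc by auto. apply ln_increasing; lra. }
  set (A := ln (alpha p)) in *. set (L := ln (rho p e)) in *.
  assert (E1 : INR k - 1 <= A / L).
  { assert (A <= (INR k - 1) * L).
    { apply Rmult_le_compat_l with (r := INR k - 1) in L1; [|lra].
      field_simplify in L1; lra. }
    assert (A / L * L = A) by (field; lra). nra. }
  assert (E2 : A / L < INR k).
  { assert (INR k * L < A).
    { apply Rmult_lt_compat_l with (r := INR k) in L2; [|lra].
      field_simplify in L2; lra. }
    assert (A / L * L = A) by (field; lra). nra. }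
  unfold cascade_threshold, logb. fold (alpha p). fold A L.
  unfold Int_part.
  rewrite <- (up_tech (A / L) (Z.of_nat k - 1)).
  - lia.
  - rewrite minus_IZR, <- INR_IZR_INZ. simpl. lra.
  - replace (Z.of_nat k - 1 + 1)%Z with (Z.of_nat k) by lia. rewrite <- INR_IZR_INZ. lra.
Qed.

Lemma ccp_formula p e k : 1/2 < p < 1 -> (1 <= k)%nat -> cascade_threshold p e = Z.of_nat k ->
  correct_cascade_prob p e = 1 / (1 + rho p e ^ k).
Proof.
  intros Hp Hk HK. unfold correct_cascade_prob. cbv zeta. rewrite HK.
  pose proof (flip_bounds e).
  set (u := flip_prob e) in *.
  change (real (Lim_seq (fun n => reach (p * (1 - u) + (1 - p) * u) (Z.of_nat k) 1 n 0)))
    with (Lf (p * (1 - u) + (1 - p) * u) (Z.of_nat k) 1 0).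
  change (real (Lim_seq (fun n => reach ((1 - p) * (1 - u) + p * u) (Z.of_nat k) (-1) n 0)))
    with (Lf ((1 - p) * (1 - u) + p * u) (Z.of_nat k) (-1) 0).
  assert (0 < u*(1-p)) by (apply Rmult_lt_0_compat; lra).
  assert (0 < p*(1-u)) by (apply Rmult_lt_0_compat; lra).
  assert (0 < u*p) by (apply Rmult_lt_0_compat; lra).
  assert (0 < (1-p)*(1-u)) by (apply Rmult_lt_0_compat; lra).
  rewrite Lf_plus by (auto; lra). rewrite Lf_minus by (auto; lra).
  unfold rho. fold u.
  replace (1 - (p * (1 - u) + (1 - p) * u)) with ((1 - u) * (1 - p) + u * p) by ring.
  replace (1 - ((1 - p) * (1 - u) + p * u)) with (u * (1 - p) + p * (1 - u)) by ring.
  replace (p * (1 - u) + (1 - p) * u) with (u * (1 - p) + p * (1 - u)) by ring.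
  replace ((1 - p) * (1 - u) + p * u) with ((1 - u) * (1 - p) + u * p) by ring.
  field. set (r := ((1 - u) * (1 - p) + u * p) / (u * (1 - p) + p * (1 - u))).
  assert (0 < r) by (apply Rdiv_lt_0_compat; lra).
  pose proof (pow_lt r k H4). lra.
Qed.

Lemma flip_decr e1 e2 : e1 < e2 -> flip_prob e2 < flip_prob e1.
Proof.
  intros H. unfold flip_prob. apply exp_increasing in H.
  pose proof (exp_pos e1). unfold Rdiv. rewrite !Rmult_1_l.
  apply Rinv_lt_contravar; nra.
Qed.

Lemma rho_decr p e1 e2 : 1/2 < p < 1 -> e1 < e2 -> rho p e2 < rho p e1.
Proof.
  intros Hp H. rewrite !rho_form by auto.
  pose proof (flip_decr e1 e2 H). pose proof (den_pos p e1 Hp). pose proof (den_pos p e2 Hp).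
  pose proof (alpha_bounds p Hp).
  set (u1 := flip_prob e1) in *. set (u2 := flip_prob e2) in *. set (a := alpha p) in *.
  apply Rminus_lt_0.
  replace ((a + u1 * (1 - a)) / (1 - u1 * (1 - a)) - (a + u2 * (1 - a)) / (1 - u2 * (1 - a)))
    with ((1 - a) * (1 + a) * (u1 - u2) / ((1 - u1 * (1 - a)) * (1 - u2 * (1 - a)))) by (field; lra).
  apply Rdiv_lt_0_compat; [|apply Rmult_lt_0_compat; lra].
  apply Rmult_lt_0_compat; [|lra]. apply Rmult_lt_0_compat; lra.
Qed.

Lemma pow_lt_mono (x y : R) (n : nat) : 0 < x < y -> (1 <= n)%nat -> x ^ n < y ^ n.
Proof.
  intros H Hn. induction n as [|n IH]; [lia|].
  destruct n as [|n]. simpl. lra.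
  assert (x ^ S n < y ^ S n) by (apply IH; lia).
  pose proof (pow_lt x (S n) ltac:(lra)).
  change (x * x ^ S n < y * y ^ S n). nra.
Qed.

Theorem theorem2 (p : R) (k : nat) :
  1 / 2 < p < 1 -> (2 <= k)%nat ->
  (forall eps : R, in_interval p k eps -> cascade_threshold p eps = Z.of_nat k) /\
  (forall eps1 eps2 : R, in_interval p k eps1 -> in_interval p k eps2 ->
     eps1 < eps2 -> correct_cascade_prob p eps1 < correct_cascade_prob p eps2).
Proof.
  intros Hp Hk. split.
  - intros e He. apply threshold_k; auto. apply interval_u; auto.
  - intros e1 e2 H1 H2 H12.
    rewrite (ccp_formula p e1 k), (ccp_formula p e2 k); auto; try lia;
      try (apply threshold_k; auto; apply interval_u; auto).
    pose proof (rho_decr p e1 e2 Hp H12). pose proof (rho_pos p e2 Hp).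
    pose proof (pow_lt_mono (rho p e2) (rho p e1) k ltac:(lra) ltac:(lia)).
    pose proof (pow_lt (rho p e2) k H0).
    unfold Rdiv. rewrite !Rmult_1_l. apply Rinv_lt_contravar; nra.
Qed.
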